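(* Let $n\ge3$, let every qubit carry the Hamiltonian $H_i=|1\rangle\langle1|$, and let $s=[n]$. For $|\mathrm{GHZ}_n\rangle=\frac1{\sqrt2}(|0\rangle^{\otimes n}+|1\rangle^{\otimes n})$ and $|W_n\rangle=\frac1{\sqrt n}\sum_{i=1}^n|0\cdots01_i0\cdots0\rangle$, $$M^{(s)}_E(|\mathrm{GHZ}_n\rangle)=1-\frac{1}{2^{n-1}},\qquad M^{(s)}_E(|W_n\rangle)=1-\frac{1}{2^{n-1}}\binom{n-1}{\lfloor\frac{n-1}{2}\rfloor}.$$ In particular $M^{(s)}_E(|\mathrm{GHZ}_n\rangle)>M^{(s)}_E(|W_n\rangle)$.
   Context: For $X\subseteq[n]$, $H_X=\sum_{i\in X}H_i$ with eigenvalues $0=\epsilon^X_0\le\epsilon^X_1\le\cdots$. For a state $\rho_X$ with eigenvalues $p_0\ge p_1\ge\cdots$ the passive-state energy is $\mathrm{tr}(\rho_X^pH_X)=\sum_jp_j\epsilon^X_j$. For a pure state $|\psi\rangle$ with marginals $\rho_X=\mathrm{tr}_{X^c}|\psi\rangle\langle\psi|$, $\Delta_{X|X^c}(|\psi\rangle)=\mathrm{tr}(\rho_X^pH_X)+\mathrm{tr}(\rho_{X^c}^pH_{X^c})$, set to $0$ for $X=\emptyset$ or $X=[n]$, and $M^{(s)}_E(|\psi\rangle)=2^{-|s|}\sum_{X\subseteq s}\Delta_{X|X^c}(|\psi\rangle)$. $\lfloor\cdot\rfloor$ is the floor function. *)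

(* Defs.v *)
From HB Require Import structures.
From mathcomp Require Import all_boot all_order all_algebra algC.
Set Implicit Arguments. Unset Strict Implicit. Unset Printing Implicit Defensive.
Import Order.TTheory GRing.Theory Num.Theory.
Local Open Scope ring_scope.

(* Computational basis configurations of n qubits: b i = true means |1> on qubit i. *)
Definition cfg (n : nat) := {ffun 'I_n -> bool}.

(* Basis configurations of the subsystem X (qubits outside X are set to 0,
   they play no role); this finite set indexes the computational basis of
   the Hilbert space of subsystem X. *)
Definition sub n (X : {set 'I_n}) : {set cfg n} :=
  [set b : cfg n | [forall i, (i \notin X) ==> ~~ b i]].

Definition glue n (X : {set 'I_n}) (a c : cfg n) : cfg n :=
  [ffun i => if i \in X then a i else c i].

Definition state n := cfg n -> algC.

(* Reduced density matrix rho_X = tr_{X^c} |psi><psi|. *)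
Definition rho n (psi : state n) (X : {set 'I_n}) : 'M[algC]_#|sub X| :=
  \matrix_(k, l) \sum_(c in sub (~: X))
     psi (glue X (enum_val k) c) * (psi (glue X (enum_val l) c))^*.

Definition Hloc n (X : {set 'I_n}) (i : 'I_n) : 'M[algC]_#|sub X| :=
  \matrix_(k, l) ((enum_val k == enum_val l)%:R * ((enum_val k : cfg n) i)%:R).

Definition HX n (X : {set 'I_n}) : 'M[algC]_#|sub X| := \sum_(i in X) Hloc X i.

Definition eigs m (A : 'M[algC]_m) : seq algC :=
  sval (closed_field_poly_normal (char_poly A)).

(* Passive-state energy tr(rho^p H) = sum_j p_j eps_j, p decreasing, eps increasing. *)
Definition passive_energy m (R H : 'M[algC]_m) : algC :=
  let p := sort (fun x y : algC => y <= x) (eigs R) in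
  let e := sort (fun x y : algC => x <= y) (eigs H) in
  \sum_(j < m) p`_j * e`_j.

Definition Delta n (psi : state n) (X : {set 'I_n}) : algC :=
  if (X == set0) || (X == setT) then 0 else
  passive_energy (rho psi X) (HX X) + passive_energy (rho psi (~: X)) (HX (~: X)).

Definition ME n (s : {set 'I_n}) (psi : state n) : algC :=
  (2 ^+ #|s|)^-1 * \sum_(X : {set 'I_n} | X \subset s) Delta psi X.

Definition GHZ n : state n := fun b =>
  if [forall i, ~~ b i] || [forall i, b i] then (sqrtC 2)^-1 else 0.

Definition Wst n : state n := fun b =>
  if #|[set i | b i]| == 1%N then (sqrtC n%:R)^-1 else 0.

Arguments GHZ n : clear implicits.
Arguments Wst n : clear implicits.

(* Main.v *)
Require Import Defs.
From mathcomp Require Import all_boot all_order all_algebra algC.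
From mathcomp Require Import ring zify.
Set Implicit Arguments. Unset Strict Implicit. Unset Printing Implicit Defensive.

Lemma tele_part n J : (0 < J)%N -> (2 * (J.-1) < n)%N ->
  \sum_(k < J) 'C(n, k) * ((n - k) - k) = n * 'C(n.-1, J.-1).
Proof.
elim: J => [//|J IH] _ hJ.
case: J IH hJ => [|J] IH hJ.
  by rewrite big_ord_recr big_ord0 /= bin0 !subn0 mul1n bin0 muln1.
rewrite big_ord_recr /= IH //; last by lia.
have e1 := mul_bin_down n J.+1.
have e2 := mul_bin_diag n J.
rewrite mulnBr.
have hle : J.+1 <= n - J.+1 by lia.
have h3 : 'C(n, J.+1) * J.+1 <= 'C(n, J.+1) * (n - J.+1) by rewrite leq_mul2l hle orbT.
move: e1 e2 h3; rewrite [(n - J.+1) * _]mulnC [J.+1 * _]mulnC.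
set a := 'C(n, J.+1) * (n - J.+1); set b := 'C(n, J.+1) * J.+1.
set c := n * 'C(n.-1, J.+1); set d := n * 'C(n.-1, J).
lia.
Qed.

Lemma sum_bin n : \sum_(k < n.+1) 'C(n, k) = 2 ^ n.
Proof.
have := expnDn 1 1 n; rewrite addn1 => ->.
by apply: eq_bigr => i _; rewrite !exp1n !muln1.
Qed.

Lemma comb_id n : (0 < n)%N ->
  \sum_(k < n.+1) 'C(n, k) * minn k (n - k) + n * 'C(n.-1, n.-1./2) = n * 2 ^ n.-1.
Proof.
move=> n0.
have A : \sum_(k < n.+1) 'C(n, k) * (n - k) = n * 2 ^ n.-1.
  rewrite -sum_bin big_distrr /=.
  case: n n0 => [//|m] _ /=.
  rewrite big_ord_recr /= subnn muln0 addn0.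
  by apply: eq_bigr => i _; rewrite mul_bin_down mulnC.
have B : \sum_(k < n.+1) 'C(n, k) * ((n - k) - k) = n * 'C(n.-1, n.-1./2).
  rewrite -(tele_part (J := n.-1./2.+1)) //; last by (simpl; lia).
  have hJ : (n.-1./2.+1 <= n.+1)%N by lia.
  rewrite -(subnKC hJ) big_split_ord /= [X in _ + X]big1 ?addn0 //.
  move=> i _; apply/eqP; rewrite muln_eq0; apply/orP; right.
  rewrite subn_eq0; simpl; lia.
rewrite -A -B -big_split /=; apply: eq_bigr => i _.
rewrite -mulnDr; congr (_ * _); lia.
Qed.

Import Order.TTheory GRing.Theory Num.Theory.
Local Open Scope ring_scope.

Lemma eigs_perm m (A : 'M[algC]_m) (r : seq algC) :
  char_poly A = \prod_(x <- r) ('X - x%:P) -> perm_eq (eigs A) r.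
Proof.
move=> hA; apply: prod_XsubC_eq.
rewrite /eigs; case: (closed_field_poly_normal _) => s /= hs.
by rewrite -hA {1}hs (monicP (char_poly_monic A)) scale1r.
Qed.

Lemma char_poly_sim m (A P D : 'M[algC]_m) :
  P \in unitmx -> A *m P = P *m D -> char_poly A = char_poly D.
Proof.
move=> uP AP.
have -> : D = invmx P *m A *m P by rewrite -mulmxA AP mulKmx.
rewrite /char_poly /char_poly_mx.
have h1 : map_mx polyC (invmx P) *m map_mx polyC P = 1%:M.
  by rewrite -map_mxM mulVmx // map_mx1.
have -> : 'X%:M - map_mx polyC (invmx P *m A *m P) =
   map_mx polyC (invmx P) *m ('X%:M - map_mx polyC A) *m map_mx polyC P.
  by rewrite !map_mxM mulmxBr mulmxBl -(mulmxA _ _%:M) mul_scalar_mx -scalemxAr h1 scalemx1.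
by rewrite !det_mulmx mulrAC -det_mulmx h1 det1 mul1r.
Qed.

Definition mk n (X : {set 'I_n}) (f : cfg n -> cfg n -> algC) : 'M[algC]_#|sub X| :=
  \matrix_(k, l) f (enum_val k) (enum_val l).

Lemma mkM n (X : {set 'I_n}) f g :
  mk X f *m mk X g = mk X (fun a b => \sum_(c in sub X) f a c * g c b).
Proof.
apply/matrixP => i j; rewrite !mxE (big_enum_val (fun c => f (enum_val i) c * g c (enum_val j))).
by apply: eq_bigr => k _; rewrite !mxE.
Qed.

Lemma mk1 n (X : {set 'I_n}) : mk X (fun a b => (a == b)%:R) = 1%:M.
Proof.
by apply/matrixP => i j; rewrite !mxE (inj_eq enum_val_inj).
Qed.

Lemma char_poly_mkdiag n (X : {set 'I_n}) (d : cfg n -> algC) :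
  char_poly (mk X (fun a b => (a == b)%:R * d a)) =
  \prod_(x <- [seq d c | c <- enum (sub X)]) ('X - x%:P).
Proof.
rewrite char_poly_trig; last first.
  apply/is_trig_mxP => i j hij; rewrite mxE (inj_eq enum_val_inj).
  by case: eqP hij => [->|_]; rewrite ?ltnn ?mul0r.
rewrite big_map big_enum /= (big_enum_val (fun c => 'X - (d c)%:P)).
by apply: eq_bigr => i _; rewrite mxE eqxx mul1r.
Qed.

Lemma eigs_mkdiag n (X : {set 'I_n}) (d : cfg n -> algC) :
  perm_eq (eigs (mk X (fun a b => (a == b)%:R * d a))) [seq d c | c <- enum (sub X)].
Proof. exact/eigs_perm/char_poly_mkdiag. Qed.

Lemma sort_eigs (leT : rel algC) m (A : 'M[algC]_m) s :
  (forall x y, x \is Num.real -> y \is Num.real -> leT x y || leT y x) ->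
  transitive leT -> antisymmetric leT ->
  perm_eq (eigs A) s -> all (fun x => x \is Num.real) s -> sorted leT s ->
  sort leT (eigs A) = s.
Proof.
move=> tot tr asym pe rs ss.
have rA : all (fun x => x \is Num.real) (eigs A) by rewrite (perm_all _ pe).
rewrite -(sorted_sort tr ss); apply/perm_sort_inP => //.
- move=> x y hx hy; apply: tot; [exact: (allP rA) | exact: (allP rA)].
- by move=> x y z _ _ _; apply: tr.
- by move=> x y _ _; apply: asym.
Qed.

Lemma perm_two (T : finType) (A : {set T}) u v (d : T -> algC) :
  u \in A -> v \in A -> u != v ->
  perm_eq [seq d c | c <- enum A]
     (d u :: d v :: [seq d c | c <- rem v (rem u (enum A))]) /\
  (forall c, c \in rem v (rem u (enum A)) -> [/\ c \in A, c != u & c != v]) /\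
  size (rem v (rem u (enum A))) = (#|A| - 2)%N.
Proof.
move=> uA vA uv.
have uq : uniq (enum A) := enum_uniq _.
have uE : u \in enum A by rewrite mem_enum.
have vE : v \in rem u (enum A) by rewrite (mem_rem_uniq _ uq) inE eq_sym uv mem_enum.
have uq2 : uniq (rem u (enum A)) := rem_uniq _ uq.
split; last split.
- rewrite -map_cons -map_cons; apply: perm_map.
  apply: (perm_trans (perm_to_rem uE)); rewrite perm_cons.
  exact: perm_to_rem.
- move=> c; rewrite (mem_rem_uniq _ uq2) inE (mem_rem_uniq _ uq) inE mem_enum.
  by case/and3P=> cv cu cA; split.
- by rewrite (size_rem vE) (size_rem uE) cardE subn2.
Qed.


Definition c0 n : cfg n := [ffun _ => false].
Definition ev n (i : 'I_n) : cfg n := [ffun j => j == i].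
Definition hX n (X : {set 'I_n}) (a : cfg n) : nat := (\sum_(i in X) (a i : nat))%N.

Lemma HX_mk n (X : {set 'I_n}) : HX X = mk X (fun a b => (a == b)%:R * (hX X a)%:R).
Proof.
apply/matrixP => k l; rewrite /HX summxE !mxE /hX natr_sum mulr_sumr.
by apply: eq_bigr => i _; rewrite !mxE.
Qed.

Lemma c0_sub n (X : {set 'I_n}) : c0 n \in sub X.
Proof. by rewrite inE; apply/forallP => i; rewrite ffunE implybT. Qed.

Lemma ev_sub n (X : {set 'I_n}) i : i \in X -> ev i \in sub X.
Proof.
move=> iX; rewrite inE; apply/forallP => j; rewrite ffunE; apply/implyP => jX.
by apply/eqP => ji; move: jX; rewrite ji iX.
Qed.

Lemma c0_ev n (i : 'I_n) : c0 n != ev i.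
Proof. by apply/eqP => /ffunP /(_ i); rewrite !ffunE eqxx. Qed.

Lemma hX_c0 n (X : {set 'I_n}) : hX X (c0 n) = 0%N.
Proof. by rewrite /hX big1 // => i _; rewrite ffunE. Qed.

Lemma hX_ev n (X : {set 'I_n}) i : i \in X -> hX X (ev i) = 1%N.
Proof.
move=> iX; rewrite /hX (bigD1 i) //= ffunE eqxx big1 // => j /andP[_ ji].
by rewrite ffunE (negPf ji).
Qed.

Lemma hX_ge1 n (X : {set 'I_n}) a : a \in sub X -> a != c0 n -> (1 <= hX X a)%N.
Proof.
move=> aX ac; have [i ai] : exists i, a i.
  apply/existsP; apply: contraR ac => /existsPn h; apply/eqP/ffunP => i.
  by rewrite ffunE; apply/negbTE/h.
have iX : i \in X.
  move: aX; rewrite inE => /forallP /(_ i); rewrite ai /=.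
  by case: (i \in X).
by rewrite /hX (bigD1 i) //= ai.
Qed.

Lemma sort_HX n (X : {set 'I_n}) i0 : i0 \in X ->
  exists r, sort (fun x y : algC => x <= y) (eigs (HX X)) = 0 :: 1 :: r.
Proof.
move=> iX.
have [pe [mem _]] := perm_two (fun c => (hX X c)%:R : algC) (c0_sub X) (ev_sub iX) (c0_ev i0).
set rest := rem _ _ in pe mem.
exists (sort (fun x y : algC => x <= y) [seq (hX X c)%:R | c <- rest]).
rewrite HX_mk; apply: sort_eigs.
- by move=> x y rx ry; apply: real_leVge.
- by move=> x y z; apply: le_trans.
- by move=> x y; apply: le_anti.
- apply: (perm_trans (eigs_mkdiag _ _)); apply: (perm_trans pe).
  rewrite hX_c0 hX_ev // !perm_cons perm_sym.
  by rewrite perm_sort.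
- rewrite /= real0 real1 /= all_sort; apply/allP => x /mapP [c _ ->]; exact: realn.
- rewrite /= ler01 /=.
  have ss : sorted (fun x y : algC => x <= y) (sort (fun x y : algC => x <= y) [seq (hX X c)%:R | c <- rest]).
    apply: (sort_sorted_in (P := fun x : algC => x \is Num.real)).
      by move=> x y rx ry; apply: real_leVge.
    by apply/allP => x /mapP [c _ ->]; exact: realn.
  case E: (sort _ _) ss => [//|x s] /= ->; rewrite andbT.
  have : x \in [seq (hX X c)%:R | c <- rest] by rewrite -(mem_sort (fun x y : algC => x <= y)) E inE eqxx.
  case/mapP => c cr ->; have [cX cu _] := mem c cr.
  by rewrite ler1n hX_ge1.
Qed.

Lemma sum_two m (x y : algC) r : (1 < m)%N ->
  \sum_(j < m) (x :: y :: nseq (m - 2) 0)`_j * (0 :: 1 :: r)`_j = y.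
Proof.
case: m => [|[|m]] // _; rewrite !big_ord_recl /= mulr0 mulr1 add0r big1 ?addr0 //.
by move=> j _; rewrite nth_nseq; case: ifP; rewrite mul0r.
Qed.

Lemma passive_two n (X : {set 'I_n}) i0 (M : 'M[algC]_#|sub X|) a b :
  i0 \in X -> perm_eq (eigs M) (a :: b :: nseq (#|sub X| - 2) 0) ->
  b <= a -> 0 <= b -> passive_energy M (HX X) = b.
Proof.
move=> iX pe ba b0.
have m2 : (1 < #|sub X|)%N.
  rewrite (cardD1 (c0 n)) c0_sub ltnS lt0n; apply/pred0Pn; exists (ev i0).
  by rewrite /= eq_sym c0_ev ev_sub.
have [r er] := sort_HX iX.
have rb : b \is Num.real by rewrite ger0_real.
have ra : a \is Num.real by rewrite ger0_real // (le_trans b0 ba).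
have ep : sort (fun x y : algC => y <= x) (eigs M) = a :: b :: nseq (#|sub X| - 2) 0.
  apply: sort_eigs => //.
  - by move=> x y rx ry; rewrite orbC; apply: real_leVge.
  - by move=> x y z hxy hyz; apply: le_trans hyz hxy.
  - by move=> x y h; apply: le_anti; rewrite andbC.
  - rewrite /= ra rb /=; apply/allP => x /nseqP [-> _]; exact: real0.
  - rewrite /= ba /=; case: (#|sub X| - 2)%N => //= k; rewrite b0 /=.
    by elim: k => //= k ->; rewrite lexx.
rewrite /passive_energy /= ep er; exact: sum_two.
Qed.


Definition w n (x : cfg n) : nat := #|[set i | x i]|.

Lemma sub_out n (X : {set 'I_n}) a i : a \in sub X -> i \notin X -> a i = false.
Proof. by rewrite inE => /forallP /(_ i) /implyP h /h /negbTE. Qed.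

Lemma glue_inj n (X : {set 'I_n}) a c a' c' :
  a \in sub X -> a' \in sub X -> c \in sub (~: X) -> c' \in sub (~: X) ->
  (glue X a c == glue X a' c') = (a == a') && (c == c').
Proof.
move=> aX a'X cY c'Y; apply/eqP/andP => [/ffunP h|[/eqP-> /eqP->] //].
split; apply/eqP/ffunP => i; have := h i; rewrite !ffunE.
- case: (boolP (i \in X)) => // iX _.
  by rewrite (sub_out aX iX) (sub_out a'X iX).
- case: (boolP (i \in X)) => // iX _.
  by rewrite (sub_out cY) ?(sub_out c'Y) // inE iX.
Qed.

Lemma w_glue n (X : {set 'I_n}) a c : a \in sub X -> c \in sub (~: X) ->
  w (glue X a c) = (w a + w c)%N.
Proof.
move=> aX cY; rewrite /w.
have -> : [set i | glue X a c i] = [set i | a i] :|: [set i | c i].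
  apply/setP => i; rewrite !inE ffunE; case: (boolP (i \in X)) => iX.
    by rewrite (sub_out cY) ?orbF // inE iX.
  by rewrite (sub_out aX iX).
rewrite cardsU; have -> : [set i | a i] :&: [set i | c i] = set0.
  apply/setP => i; rewrite !inE; case: (boolP (i \in X)) => iX.
    by rewrite (sub_out cY) ?andbF // inE iX.
  by rewrite (sub_out aX iX).
by rewrite cards0 subn0.
Qed.

Lemma w_eq0 n (x : cfg n) : (w x == 0%N) = (x == c0 n).
Proof.
rewrite /w cards_eq0; apply/idP/idP => /eqP h.
  apply/eqP/ffunP => i; rewrite ffunE; apply/negbTE/negP => xi.
  have : i \in [set i | x i] by rewrite inE.
  by rewrite h inE.
by apply/eqP/setP => i; rewrite h !inE ffunE.
Qed.

Lemma w_ev n (i : 'I_n) : w (ev i) = 1%N.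
Proof.
rewrite /w (_ : [set j | ev i j] = [set i]) ?cards1 //.
by apply/setP => j; rewrite !inE ffunE.
Qed.

Lemma sum_del_r (T : finType) (A : {pred T}) u (F : T -> algC) :
  u \in A -> \sum_(c in A) F c * (c == u)%:R = F u.
Proof.
move=> uA; rewrite (bigD1 u) //= eqxx mulr1 big1 ?addr0 // => c /andP[_ /negPf->].
by rewrite mulr0.
Qed.

Lemma sum_del_l (T : finType) (A : {pred T}) u (F : T -> algC) :
  u \in A -> \sum_(c in A) (u == c)%:R * F c = F u.
Proof.
move=> uA; rewrite -(sum_del_r F uA); apply: eq_bigr => c _.
by rewrite mulrC eq_sym.
Qed.

Lemma sum_w0 n (X : {set 'I_n}) : \sum_(c in sub X) (w c == 0%N)%:R = 1 :> algC.
Proof.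
rewrite (eq_bigr (fun c => (fun _ => 1) c * (c == c0 n)%:R)).
  by rewrite (sum_del_r (fun _ => 1) (c0_sub X)).
by move=> c _; rewrite w_eq0 mul1r.
Qed.

Lemma sum_w1 n (X : {set 'I_n}) : \sum_(c in sub X) (w c == 1%N)%:R = #|X|%:R :> algC.
Proof.
rewrite (eq_bigr (fun c => if w c == 1%N then 1 else 0)); last by move=> c _; case: (w c == 1%N).
rewrite -big_mkcondr /= sumr_const; congr (_%:R).
rewrite (eq_card (B := [set c in sub X | w c == 1%N])); last by move=> c; rewrite inE.
have -> : [set c | c \in sub X & w c == 1%N] = [set ev i | i in X].
  apply/setP => c; rewrite inE; apply/andP/imsetP => [[cX /cards1P [i hi]]|[i iX ->]].
    have ec : c = ev i.
      apply/ffunP => j; rewrite ffunE.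
      have := congr1 (fun A : {set 'I_n} => j \in A) hi; rewrite /= !inE.
      by [].
    exists i => //; apply: contraT => iX.
    by move: (sub_out cX iX); rewrite ec ffunE eqxx.
  by split; [exact: ev_sub | rewrite w_ev].
rewrite card_imset //; move=> i j /ffunP /(_ j); rewrite !ffunE eqxx.
by move/eqP->.
Qed.


Lemma map_zero (T : eqType) (d : T -> algC) (s : seq T) :
  (forall c, c \in s -> d c = 0) -> [seq d c | c <- s] = nseq (size s) 0.
Proof.
elim: s => //= x s IH h; rewrite h ?inE ?eqxx // IH // => c cs.
by apply: h; rewrite inE cs orbT.
Qed.

Lemma eig2 n (X : {set 'I_n}) (d : cfg n -> algC) u v :
  u \in sub X -> v \in sub X -> u != v ->
  (forall c, c \in sub X -> c != u -> c != v -> d c = 0) ->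
  perm_eq (eigs (mk X (fun a b => (a == b)%:R * d a)))
          (d u :: d v :: nseq (#|sub X| - 2) 0).
Proof.
move=> uX vX uv hd.
have [pe [mem sz]] := perm_two d uX vX uv.
apply: (perm_trans (eigs_mkdiag _ _)); apply: (perm_trans pe).
rewrite map_zero ?sz // => c /mem [cX cu cv]; exact: hd.
Qed.

Definition oneS n (X : {set 'I_n}) : cfg n := [ffun i => i \in X].
Definition c1 n : cfg n := [ffun _ => true].

Lemma oneS_sub n (X : {set 'I_n}) : oneS X \in sub X.
Proof. by rewrite inE; apply/forallP => i; rewrite /oneS ffunE; case: (i \in X). Qed.

Lemma glue00 n (X : {set 'I_n}) : glue X (c0 n) (c0 n) = c0 n.
Proof. by apply/ffunP => i; rewrite !ffunE; case: (i \in X). Qed.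

Lemma glue11 n (X : {set 'I_n}) : glue X (oneS X) (oneS (~: X)) = c1 n.
Proof. by apply/ffunP => i; rewrite /c1 /oneS !ffunE inE; case: (i \in X). Qed.

Lemma c0_oneS n (X : {set 'I_n}) : X != set0 -> c0 n != oneS X.
Proof.
case/set0Pn => i iX; apply/eqP => /ffunP /(_ i); rewrite !ffunE iX.
by [].
Qed.

Definition gh n (x : cfg n) := [forall i, ~~ x i] || [forall i, x i].

Lemma gh_glue n (X : {set 'I_n}) a c : a \in sub X -> c \in sub (~: X) ->
  gh (glue X a c) = ((a == c0 n) && (c == c0 n)) || ((a == oneS X) && (c == oneS (~: X))).
Proof.
move=> aX cY; rewrite /gh.
have -> : [forall i, ~~ glue X a c i] = (glue X a c == glue X (c0 n) (c0 n)).
  rewrite glue00; apply/forallP/eqP => [h|->]; last by move=> i; rewrite ffunE.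
  by apply/ffunP => i; rewrite [in RHS]ffunE; apply/negbTE/h.
have -> : [forall i, glue X a c i] = (glue X a c == glue X (oneS X) (oneS (~: X))).
  rewrite glue11; apply/forallP/eqP => [h|->]; last by move=> i; rewrite ffunE.
  by apply/ffunP => i; rewrite [in RHS]ffunE h.
by rewrite !glue_inj ?c0_sub ?oneS_sub.
Qed.

Lemma gg : (sqrtC 2)^-1 * ((sqrtC 2)^-1)^* = 2^-1 :> algC.
Proof.
have h0 : 0 <= (sqrtC 2 : algC)^-1 by rewrite invr_ge0 sqrtC_ge0 ler0n.
by rewrite geC0_conj // -invrM ?unitfE -?expr2 ?sqrtCK // sqrtC_eq0 pnatr_eq0.
Qed.

Definition dG n (X : {set 'I_n}) (a : cfg n) : algC :=
  ((a == c0 n)%:R + (a == oneS X)%:R) / 2.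

Lemma rho_GHZ n (X : {set 'I_n}) : X != set0 -> ~: X != set0 ->
  rho (GHZ n) X = mk X (fun a b => (a == b)%:R * dG X a).
Proof.
move=> X0 Y0; apply/matrixP => k l; rewrite !mxE.
set a := enum_val k; set b := enum_val l.
have aX : a \in sub X by apply: enum_valP.
have bX : b \in sub X by apply: enum_valP.
clearbody a b.
have hE : forall c, c \in sub (~: X) ->
   GHZ n (glue X a c) * (GHZ n (glue X b c))^* =
   (((c == c0 n) && ((a == c0 n) && (b == c0 n)))%:R +
    ((c == oneS (~: X)) && ((a == oneS X) && (b == oneS X)))%:R) / 2.
  move=> c cY; rewrite /GHZ -/(gh _) -/(gh _) !gh_glue //.
  have hc : ~~ ((c == c0 n) && (c == oneS (~: X))).
    by apply/andP => [[/eqP -> /eqP h]]; move: (c0_oneS Y0); rewrite h eqxx.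
  case: (c == c0 n) hc; case: (c == oneS (~: X)) => // _;
  case: (a == c0 n); case: (b == c0 n); case: (a == oneS X); case: (b == oneS X);
  rewrite /= ?rmorph0 ?mulr0 ?mul0r ?gg ?addr0 ?add0r ?mul1r ?mul0r ?div0r //.

under eq_bigr => c cY do rewrite (hE c cY).
rewrite -mulr_suml big_split /=.
rewrite (eq_bigr (fun c => ((a == c0 n) && (b == c0 n))%:R * (c == c0 n)%:R));
  last by move=> c _; case: (c == c0 n); rewrite /= ?mulr1 ?mulr0.
rewrite (sum_del_r (fun _ => ((a == c0 n) && (b == c0 n))%:R) (c0_sub _)).
rewrite (eq_bigr (fun c => ((a == oneS X) && (b == oneS X))%:R * (c == oneS (~: X))%:R));
  last by move=> c _; case: (c == oneS (~: X)); rewrite /= ?mulr1 ?mulr0.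
rewrite (sum_del_r (fun _ => ((a == oneS X) && (b == oneS X))%:R) (oneS_sub _)).
rewrite /dG; case: (a =P b) => [<-|ab]; first by rewrite !andbb mul1r.
have h0 : ((a == c0 n) && (b == c0 n)) = false.
  by apply/negbTE/negP => /andP [/eqP ha /eqP hb]; apply: ab; rewrite ha hb.
have h1 : ((a == oneS X) && (b == oneS X)) = false.
  by apply/negbTE/negP => /andP [/eqP ha /eqP hb]; apply: ab; rewrite ha hb.
by rewrite h0 h1 /= !mul0r addr0 mul0r.
Qed.


Lemma passive_GHZ n (X : {set 'I_n}) : X != set0 -> ~: X != set0 ->
  passive_energy (rho (GHZ n) X) (HX X) = 2^-1.
Proof.
move=> X0 Y0; have [i0 iX] := set0Pn _ X0.
rewrite rho_GHZ //; apply: (passive_two (a := 2^-1) iX) => //; last first.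
  by rewrite invr_ge0 ler0n.
have hc := c0_oneS X0.
have := eig2 (c0_sub X) (oneS_sub X) hc (d := dG X).
rewrite /dG eqxx (negPf hc) eq_sym (negPf hc) eqxx /= addr0 add0r mul1r.
apply => c _ h1 h2; by rewrite (negPf h1) (negPf h2) addr0 mul0r.
Qed.

Lemma Delta_GHZ n (X : {set 'I_n}) : X != set0 -> X != setT ->
  Delta (GHZ n) X = 1.
Proof.
move=> X0 XT.
have Y0 : ~: X != set0.
  by apply: contra XT => /eqP h; rewrite -(setCK X) h setC0.
rewrite /Delta (negPf X0) (negPf XT) /= passive_GHZ // passive_GHZ ?setCK //.
by field.
Qed.


Definition sg n (a : cfg n) : algC := (w a == 1%N)%:R.
Definition ze n (a : cfg n) : algC := (w a == 0%N)%:R.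
Definition dl n (a b : cfg n) : algC := (a == b)%:R.

Definition fW n (X : {set 'I_n}) (a b : cfg n) : algC :=
  sg a * sg b * (n%:R)^-1 + ze a * ze b * (#|~: X|%:R / n%:R).

Lemma rr n : (0 < n)%N ->
  (sqrtC n%:R)^-1 * ((sqrtC n%:R)^-1)^* = (n%:R)^-1 :> algC.
Proof.
move=> n0; have h0 : 0 <= (sqrtC n%:R : algC)^-1 by rewrite invr_ge0 sqrtC_ge0 ler0n.
rewrite geC0_conj // -invrM ?unitfE -?expr2 ?sqrtCK // sqrtC_eq0 pnatr_eq0 -lt0n //.
Qed.

Lemma rho_W n (X : {set 'I_n}) : (0 < n)%N -> rho (Wst n) X = mk X (fW X).
Proof.
move=> n0; apply/matrixP => k l; rewrite !mxE.
set a := enum_val k; set b := enum_val l.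
have aX : a \in sub X by apply: enum_valP.
have bX : b \in sub X by apply: enum_valP.
clearbody a b.
have hE : forall c, c \in sub (~: X) ->
   Wst n (glue X a c) * (Wst n (glue X b c))^* =
   (((w a == 1%N) && (w b == 1%N))%:R * (w c == 0%N)%:R +
    ((w a == 0%N) && (w b == 0%N))%:R * (w c == 1%N)%:R) * (n%:R)^-1.
  move=> c cY; rewrite /Wst -/(w _) -/(w _) !w_glue //.
  case: (w c) => [|[|m]]; case: (w a) => [|[|?]]; case: (w b) => [|[|?]];
  rewrite /= ?rmorph0 ?mulr0 ?mul0r ?rr ?addr0 ?add0r ?mul1r ?mulr1 ?mul0r //.
under eq_bigr => c cY do rewrite (hE c cY).
rewrite -mulr_suml big_split /= -!mulr_sumr sum_w0 sum_w1 /fW /sg /ze.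
case: (w a == 1%N); case: (w b == 1%N); case: (w a == 0%N); case: (w b == 0%N);
  rewrite /= ?mul0r ?mul1r ?mulr0 ?mulr1 ?add0r ?addr0 //; ring.
Qed.


Definition PW n (i0 : 'I_n) (a b : cfg n) : algC :=
  if b == ev i0 then sg a else if w b == 1%N then dl a b - dl a (ev i0) else dl a b.
Definition QW n (X : {set 'I_n}) (i0 : 'I_n) (a b : cfg n) : algC :=
  if w b == 1%N then dl a b - dl b (ev i0) * dl a (ev i0) + (#|X|%:R)^-1 * (2 * dl a (ev i0) - sg a)
  else dl a b.
Definition dd n (X : {set 'I_n}) (i0 : 'I_n) (a : cfg n) : algC :=
  (#|~: X|%:R / n%:R) * ze a + (#|X|%:R / n%:R) * dl a (ev i0).

Lemma neq_z n (i0 : 'I_n) c : w c != 1%N -> dl c (ev i0) = 0.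
Proof.
move=> hc; rewrite /dl; case: (c =P ev i0) => // ec.
by move: hc; rewrite ec w_ev.
Qed.

Lemma kX0 n (X : {set 'I_n}) i0 : i0 \in X -> #|X|%:R != 0 :> algC.
Proof. by move=> iX; rewrite pnatr_eq0 -lt0n; apply/card_gt0P; exists i0. Qed.

Lemma QP n (X : {set 'I_n}) i0 a b : i0 \in X -> a \in sub X -> b \in sub X ->
  \sum_(c in sub X) QW X i0 a c * PW i0 c b = dl a b.
Proof.
move=> iX aX bX; have zX : ev i0 \in sub X by exact: ev_sub.
have wz : w (ev i0) = 1%N by exact: w_ev.
have kX0 := kX0 iX; rewrite /PW; case: (b =P (ev i0)) => [->|bz].
  have pw : forall c, QW X i0 a c * sg c =
     dl a c * sg c - (fun _ => dl a (ev i0)) c * dl c (ev i0) + (#|X|%:R)^-1 * (2 * dl a (ev i0) - sg a) * sg c.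
    move=> c; rewrite /QW /sg; case: (boolP (w c == 1%N)) => hc /=.
      by rewrite mulr1; ring.
    by rewrite (neq_z i0 hc) !mulr0 subr0 addr0.
  under eq_bigr => c _ do rewrite pw.
  rewrite !big_split /= sumrN (sum_del_l (@sg n) aX) (sum_del_r (fun _ => dl a (ev i0)) zX).
  rewrite -mulr_sumr sum_w1.
  have := kX0; move: (#|X|%:R : algC) => k k0; by field.
case: (boolP (w b == 1%N)) => hb.
  under eq_bigr => c _ do rewrite mulrBr.
  rewrite sumrB (sum_del_r (QW X i0 a) bX) (sum_del_r (QW X i0 a) zX) /QW hb wz eqxx.
  have -> : dl b (ev i0) = 0 by rewrite /dl; case: eqP.
  rewrite /dl eqxx /= mul0r mul1r; ring.
by rewrite /dl (sum_del_r (QW X i0 a) bX) /QW (negPf hb).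
Qed.

Lemma MP n (X : {set 'I_n}) i0 a b : i0 \in X -> a \in sub X -> b \in sub X ->
  \sum_(c in sub X) fW X a c * PW i0 c b = PW i0 a b * dd X i0 b.
Proof.
move=> iX aX bX; have zX : ev i0 \in sub X by exact: ev_sub.
have wz : w (ev i0) = 1%N by exact: w_ev.
rewrite /PW; case: (b =P (ev i0)) => [->|bz].
  have pw : forall c, fW X a c * sg c = sg a * n%:R^-1 * sg c.
    move=> c; rewrite /fW /sg /ze; case: (boolP (w c == 1%N)) => hc /=.
      by rewrite (eqP hc) /=; ring.
    by rewrite !mulr0.
  under eq_bigr => c _ do rewrite pw.
  rewrite -mulr_sumr sum_w1 /dd /dl eqxx /ze wz /=; ring.
case: (boolP (w b == 1%N)) => hb.
  under eq_bigr => c _ do rewrite mulrBr.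
  rewrite sumrB (sum_del_r (fW X a) bX) (sum_del_r (fW X a) zX) /fW /dd /sg /ze hb wz /=.
  have -> : dl b (ev i0) = 0 by rewrite /dl; case: eqP.
  rewrite (eqP hb) /=; ring.
rewrite (sum_del_r (fW X a) bX) /fW /dd /sg /ze (negPf hb) (neq_z i0 hb) /=.
rewrite !mulr0 mul0r add0r addr0.
case: (boolP (w b == 0%N)) => hb0; last by rewrite /= !mulr0 mul0r.
move: (hb0); rewrite w_eq0 => /eqP ->; rewrite /dl w_eq0 /=.
by rewrite !mulr1.
Qed.



Lemma mk_ext n (X : {set 'I_n}) f g :
  (forall a b, a \in sub X -> b \in sub X -> f a b = g a b) -> mk X f = mk X g.
Proof. by move=> h; apply/matrixP => i j; rewrite !mxE h ?enum_valP. Qed.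

Lemma eigs_W n (X : {set 'I_n}) i0 : i0 \in X -> (0 < n)%N ->
  eigs (mk X (fW X)) = eigs (mk X (fun a b => (a == b)%:R * dd X i0 a)).
Proof.
move=> iX n0; rewrite /eigs (@char_poly_sim _ _ (mk X (PW i0)) (mk X (fun a b => (a == b)%:R * dd X i0 a))) //.
  have h : mk X (QW X i0) *m mk X (PW i0) = 1%:M.
    by rewrite mkM -mk1; apply: mk_ext => a b aX bX; exact: QP.
  by case: (mulmx1_unit h).
rewrite !mkM; apply: mk_ext => a b aX bX; rewrite MP //.
symmetry; rewrite (eq_bigr (fun c => (fun c => PW i0 a c * dd X i0 c) c * (c == b)%:R)).
  by rewrite sum_del_r.
by move=> c _ /=; ring.
Qed.

Lemma c0_ev_sym n (i : 'I_n) : ev i != c0 n.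
Proof. by rewrite eq_sym c0_ev. Qed.

Lemma passive_W n (X : {set 'I_n}) i0 : i0 \in X -> (0 < n)%N ->
  passive_energy (rho (Wst n) X) (HX X) = (minn #|X| #|~: X|)%:R / n%:R.
Proof.
move=> iX n0; rewrite rho_W //.
have E := eigs_W iX n0.
have d0 : dd X i0 (c0 n) = #|~: X|%:R / n%:R.
  by rewrite /dd /ze /dl w_eq0 eqxx (negPf (c0_ev i0)) /= mulr1 mulr0 addr0.
have dz : dd X i0 (ev i0) = #|X|%:R / n%:R.
  by rewrite /dd /ze /dl w_ev eqxx /= mulr0 add0r mulr1.
have dO : forall c, c \in sub X -> c != c0 n -> c != ev i0 -> dd X i0 c = 0.
  move=> c _ h1 h2; rewrite /dd /ze /dl w_eq0 (negPf h1) (negPf h2) /=.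
  by rewrite !mulr0 addr0.
have ninv : 0 <= (n%:R : algC)^-1 by rewrite invr_ge0 ler0n.
case: (leqP #|X| #|~: X|) => h.
  have pe := eig2 (c0_sub X) (ev_sub iX) (c0_ev i0) dO.
  rewrite d0 dz -E in pe.
  apply: (passive_two iX pe); last by rewrite mulr_ge0 ?ler0n.
  by rewrite ler_wpM2r // ler_nat.
have pe := eig2 (ev_sub iX) (c0_sub X) (d := dd X i0) (c0_ev_sym i0)
  (fun c cX h1 h2 => dO c cX h2 h1).
rewrite d0 dz -E in pe.
apply: (passive_two iX pe); last by rewrite mulr_ge0 ?ler0n.
by rewrite ler_wpM2r // ler_nat ltnW.
Qed.


Lemma sum_card n (f : nat -> nat) :
  (\sum_(X : {set 'I_n}) f #|X| = \sum_(k < n.+1) 'C(n, k) * f k)%N.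
Proof.
rewrite (partition_big (fun X : {set 'I_n} => inord #|X| : 'I_n.+1) xpredT) //=.
apply: eq_bigr => k _.
rewrite (eq_bigr (fun _ => f k)); last first.
  move=> X /eqP <-; rewrite inordK // ltnS; apply: (leq_trans (max_card _)).
  by rewrite card_ord.
rewrite sum_nat_const; congr (_ * _)%N.
have := card_draws 'I_n k; rewrite card_ord => <-; apply: eq_card => X.
have hX : (#|X| < n.+1)%N.
  by rewrite ltnS; apply: (leq_trans (max_card _)); rewrite card_ord.
rewrite inE; change ((nat_of_ord (inord #|X| : 'I_n.+1) == nat_of_ord k) = (#|X| == k)).
by rewrite inordK.
Qed.

Lemma Delta_W n (X : {set 'I_n}) : (0 < n)%N ->
  Delta (Wst n) X = 2 * (minn #|X| (n - #|X|))%:R / n%:R.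
Proof.
move=> n0; rewrite /Delta.
have cC : #|~: X| = (n - #|X|)%N.
  have h := cardsC X; rewrite card_ord in h; lia.
case: (boolP (X == set0)) => [/eqP->|X0] /=.
  by rewrite cards0 min0n mulr0 mul0r.
case: (boolP (X == setT)) => [/eqP->|XT] /=.
  by rewrite cardsT card_ord subnn minn0 mulr0 mul0r.
have [i0 iX] := set0Pn _ X0.
have Y0 : ~: X != set0.
  by apply: contra XT => /eqP h; rewrite -(setCK X) h setC0.
have [i1 iY] := set0Pn _ Y0.
rewrite (passive_W iX n0) (passive_W iY n0) setCK cC minnC; ring.
Qed.

Lemma bin_gt1 n : (3 <= n)%N -> (1 < 'C(n.-1, n.-1./2))%N.
Proof.
move=> n3; have e := odd_double_half n.-1.
have ob := leq_b1 (odd n.-1).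
have hm : (2 <= n.-1)%N by lia.
have hj : (1 <= n.-1./2 < n.-1)%N.
  move: e ob hm; rewrite -!muln2; move: (n.-1./2) (odd n.-1) => j o; lia.
move: hm hj; move: (n.-1./2) => j; move: (n.-1) => m.
case: m => [//|m'] _; case: j => [//|j'] hj.
rewrite binS.
have h1 : (0 < 'C(m', j'.+1))%N by rewrite bin_gt0; lia.
have h2 : (0 < 'C(m', j'))%N by rewrite bin_gt0; lia.
lia.
Qed.


Lemma sum_del_all (T : finType) (u : T) : \sum_(c : T) (c == u)%:R = 1 :> algC.
Proof. by rewrite (bigD1 u) //= eqxx big1 ?addr0 // => c /negPf->. Qed.

Lemma card_sets n : #|{set 'I_n}| = (2 ^ n)%N.
Proof.
have := card_powerset [set: 'I_n]; rewrite cardsT card_ord => <-.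
apply: eq_card => X.
by rewrite powersetE subsetT.
Qed.

Unset Implicit Arguments.

Theorem mainTheorem7 (n : nat) (hn : (3 <= n)%N) :
  ME [set: 'I_n] (GHZ n) = 1 - (2 ^+ n.-1)^-1 /\
  ME [set: 'I_n] (Wst n) = 1 - (2 ^+ n.-1)^-1 * ('C(n.-1, n.-1./2))%:R /\
  ME [set: 'I_n] (Wst n) < ME [set: 'I_n] (GHZ n).
Proof.
have n0 : (0 < n)%N by lia.
have cT : #|[set: 'I_n]| = n by rewrite cardsT card_ord.
have T0 : [set: 'I_n] != set0.
  by apply/set0Pn; exists (Ordinal n0); rewrite inE.
have e2 : (2 : algC) ^+ n = 2 * 2 ^+ n.-1 by rewrite -exprS prednK.
have p2 : (2 : algC) ^+ n.-1 != 0 by rewrite expf_neq0 // pnatr_eq0.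
have G : ME [set: 'I_n] (GHZ n) = 1 - (2 ^+ n.-1)^-1.
  rewrite /ME cT.
  have -> : \sum_(X : {set 'I_n} | X \subset [set: 'I_n]) Delta (GHZ n) X =
            \sum_(X : {set 'I_n}) (1 - (X == set0)%:R - (X == setT)%:R).
    apply: eq_big => [X|X _]; first by rewrite subsetT.
    case: (boolP (X == set0)) => [/eqP->|X0].
      by rewrite /Delta eqxx eq_sym (negPf T0) /= subrr subr0.
    case: (boolP (X == setT)) => [/eqP->|XT].
      by rewrite /Delta eqxx orbT /= subr0 subrr.
    by rewrite Delta_GHZ // !subr0.
  rewrite !sumrB sum_del_all sum_del_all sumr_const card_sets.
  rewrite natrX e2; field; by rewrite ?pnatr_eq0 ?mulf_neq0.
have hW : \sum_(X : {set 'I_n} | X \subset [set: 'I_n]) Delta (Wst n) X =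
          2 / n%:R * (\sum_(k < n.+1) 'C(n, k) * minn k (n - k))%:R.
  have hs := sum_card n (fun k => minn k (n - k)); simpl in hs.
  rewrite -hs natr_sum mulr_sumr.
  apply: eq_big => [X|X _]; first by rewrite subsetT.
  by rewrite Delta_W //; ring.
have W : ME [set: 'I_n] (Wst n) = 1 - (2 ^+ n.-1)^-1 * ('C(n.-1, n.-1./2))%:R.
  rewrite /ME cT hW.
  have := comb_id n0; move/(congr1 (fun x : nat => x%:R : algC)).
  rewrite natrD !natrM natrX => hc.
  have -> : (\sum_(k < n.+1) 'C(n, k) * minn k (n - k))%:R =
     n%:R * 2 ^+ n.-1 - n%:R * ('C(n.-1, n.-1./2))%:R :> algC.
    by rewrite -hc addrK.
  rewrite e2; field; by rewrite p2 pnatr_eq0 -lt0n n0.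
split => //; split => //.
rewrite G W ltrD2l ltrN2 -[X in X < _]mulr1 ltr_pM2l ?invr_gt0 ?exprn_gt0 ?ltr0n //.
by rewrite ltr1n bin_gt1.
Qed.
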